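(* In type $A_{n-1}$, every intersection of shards of the Coxeter arrangement equals $C(w)$ for some $w\in S_n$, and for every $w\in S_n$ the cone $C(w)$ is an intersection of shards.
   Context: Shards. Let $V$ be a real Euclidean space with inner product $\langle\cdot,\cdot\rangle$, $\Phi\subset V$ a finite root system with a chosen set of positive roots $\Phi^+$, and $\mathcal A=\{H_\beta:\beta\in\Phi^+\}$ with $H_\beta=\{\lambda\in V:\langle\lambda,\beta\rangle=0\}$ (the Coxeter arrangement). The base region is $B=\{\lambda\in V:\langle\lambda,\beta\rangle>0\text{ for all }\beta\in\Phi^+\}$. For distinct $H,H'\in\mathcal A$ let $\mathcal A(H,H')$ be the set of hyperplanes of $\mathcal A$ containing $H\cap H'$ (a rank two subarrangement). Exactly one connected component $B'$ of $V\setminus\bigcup\mathcal A(H,H')$ contains $B$, and exactly two hyperplanes of $\mathcal A(H,H')$ contain facets of the closure of $B'$; these are the basic hyperplanes of $\mathcal A(H,H')$. Each non-basic $H''\in\mathcal A(H,H')$ is said to be cut by each of the two basic hyperplanes of $\mathcal A(H,H')$. For $H\in\mathcal A$ let $L_H$ be the set of hyperplanes of $\mathcal A$ that cut $H$ in some rank two subarrangement; the shards of $H$ are the closures of the connected components of $H\setminus\bigcup_{H_\gamma\in L_H}(H\cap H_\gamma)$. A shard of $\mathcal A$ is a shard of some $H\in\mathcal A$. An intersection of shards is $\bigcap_{\Sigma\in S}\Sigma$ for a finite set $S$ of shards (the empty intersection is $V$). Type $A_{n-1}$: $V=\{x\in\mathbb R^n:\sum_i x_i=0\}$, $\Phi^+=\{\varepsilon_j-\varepsilon_i:1\le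 i<j\le n\}$, hyperplanes $H_{i,j}=\{x\in V:x_i=x_j\}$, $B=\{x_1<\cdots<x_n\}$. For $w=w(1)\cdots w(n)\in S_n$, the blocks of $w$ are the sets of letters of its maximal decreasing runs (maximal consecutive factors $w(a)>w(a+1)>\cdots>w(b)$). The cone $C(w)\subseteq V$ is the set of $x\in V$ such that: (i) $x_i=x_j$ whenever $i,j$ lie in the same block of $w$; (ii) whenever $i<k<j$ with $i,j$ in the same block and $k$ not in that block, $x_k\le x_i$ if $k$ appears to the left of $i$ in $w$, and $x_i\le x_k$ if $k$ appears to the right of $i$ in $w$. *)

(* Defs.v *)
From Stdlib Require Import Reals Lra Lia Arith List Permutation.
Import ListNotations.
Open Scope R_scope.

(* ---------- Ambient space of type A_{n-1} ----------
   Points are x : nat -> R, coordinates x 0, ..., x (n-1) (0-indexed);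
   we require x i = 0 for i >= n so each point of V has a unique code. *)
Definition sumR (n : nat) (x : nat -> R) : R :=
  fold_right Rplus 0 (map x (seq 0 n)).

Definition inV (n : nat) (x : nat -> R) : Prop :=
  (forall i, (n <= i)%nat -> x i = 0) /\ sumR n x = 0.

(* A hyperplane H_{i,j} (i < j < n) is encoded by the pair (i,j). *)
Definition hyp := (nat * nat)%type.
Definition validH (n : nat) (h : hyp) : Prop := (fst h < snd h < n)%nat.
Definition onH (h : hyp) (x : nat -> R) : Prop := x (fst h) = x (snd h).

Definition inB (n : nat) (x : nat -> R) : Prop :=
  inV n x /\ forall i j, (i < j < n)%nat -> x i < x j.

Definition path_in (n : nat) (S : (nat -> R) -> Prop) (x y : nat -> R) : Prop :=
  exists g : R -> nat -> R,
    g 0 = x /\ g 1 = y /\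
    (forall t, 0 <= t <= 1 -> S (g t)) /\
    (forall i, (i < n)%nat -> forall t, 0 <= t <= 1 ->
        continuity_pt (fun s => g s i) t).

Definition component (n : nat) (S : (nat -> R) -> Prop) (p : nat -> R)
  : (nat -> R) -> Prop :=
  fun y => S y /\ path_in n S p y.

Definition closure (n : nat) (P : (nat -> R) -> Prop) : (nat -> R) -> Prop :=
  fun x => inV n x /\
    forall eps, 0 < eps ->
      exists y, P y /\ forall i, (i < n)%nat -> Rabs (x i - y i) < eps.

(* The closed cone C (a subset of V) has a facet contained in the
   hyperplane K: K /\ C contains a nonempty relatively open subset of K. *)
Definition hasFacetIn (n : nat) (C : (nat -> R) -> Prop) (K : hyp) : Prop :=
  exists p, inV n p /\ onH K p /\ C p /\
    exists eps, 0 < eps /\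
      forall q, inV n q -> onH K q ->
        (forall i, (i < n)%nat -> Rabs (q i - p i) < eps) -> C q.

Definition inA2 (n : nat) (H1 H2 K : hyp) : Prop :=
  validH n K /\
  forall x, inV n x -> onH H1 x -> onH H2 x -> onH K x.

Definition complA2 (n : nat) (H1 H2 : hyp) : (nat -> R) -> Prop :=
  fun x => inV n x /\ forall K, inA2 n H1 H2 K -> ~ onH K x.

Definition Bprime (n : nat) (H1 H2 : hyp) : (nat -> R) -> Prop :=
  fun y => exists b, inB n b /\ component n (complA2 n H1 H2) b y.

Definition basic (n : nat) (H1 H2 K : hyp) : Prop :=
  inA2 n H1 H2 K /\ hasFacetIn n (closure n (Bprime n H1 H2)) K.

Definition cuts (n : nat) (K H : hyp) : Prop :=
  exists H1 H2, validH n H1 /\ validH n H2 /\ H1 <> H2 /\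
    inA2 n H1 H2 H /\ ~ basic n H1 H2 H /\ basic n H1 H2 K.

Definition shardDomain (n : nat) (H : hyp) : (nat -> R) -> Prop :=
  fun x => inV n x /\ onH H x /\ forall K, validH n K -> cuts n K H -> ~ onH K x.

(* The shard of H which is the closure of the component of shardDomain H
   containing p (meaningful when validH n H and shardDomain n H p). *)
Definition shard (n : nat) (H : hyp) (p : nat -> R) : (nat -> R) -> Prop :=
  closure n (component n (shardDomain n H) p).

Definition shardData (n : nat) (d : hyp * (nat -> R)) : Prop :=
  validH n (fst d) /\ shardDomain n (fst d) (snd d).

Definition shardInter (n : nat) (l : list (hyp * (nat -> R))) : (nat -> R) -> Prop :=
  fun x => inV n x /\ Forall (fun d => shard n (fst d) (snd d) x) l.

Definition isShardIntersection (n : nat) (X : (nat -> R) -> Prop) : Prop :=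
  exists l, Forall (shardData n) l /\ forall x, X x <-> shardInter n l x.

(* ---------- Permutations and the cones C(w) ----------
   w is given in one-line notation as a list of the letters 0..n-1. *)
Definition isPerm (n : nat) (w : list nat) : Prop := Permutation w (seq 0 n).

(* letters a and b lie in the same maximal decreasing run of w *)
Definition sameBlock (w : list nat) (a b : nat) : Prop :=
  exists p q, (p < length w)%nat /\ (q < length w)%nat /\
    nth p w 0%nat = a /\ nth q w 0%nat = b /\
    forall k, (Nat.min p q <= k < Nat.max p q)%nat ->
      (nth (S k) w 0%nat < nth k w 0%nat)%nat.

Definition leftOf (w : list nat) (a b : nat) : Prop :=
  exists p q, (p < q < length w)%nat /\ nth p w 0%nat = a /\ nth q w 0%nat = b.

Definition Ccone (n : nat) (w : list nat) : (nat -> R) -> Prop :=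
  fun x => inV n x /\
    (forall i j, (i < n)%nat -> (j < n)%nat -> sameBlock w i j -> x i = x j) /\
    (forall i k j, (i < k < j)%nat -> (j < n)%nat ->
       sameBlock w i j -> ~ sameBlock w k i ->
       (leftOf w k i -> x k <= x i) /\ (leftOf w i k -> x i <= x k)).

(* Main.v *)
Require Import Defs.
From Stdlib Require Import Reals List.
From Stdlib Require Import Lra Lia Permutation Sorted ClassicalEpsilon FunctionalExtensionality Relations Ranalysis5.
Import ListNotations.
Open Scope R_scope.
Open Scope R_scope.

Lemma fold_Rplus_shift : forall l a, fold_right Rplus a l = fold_right Rplus 0 l + a.
Proof. induction l; intros; simpl; [lra|rewrite IHl; lra]. Qed.

Lemma sumR_0 : forall f, sumR 0 f = 0.
Proof. reflexivity. Qed.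

Lemma sumR_S : forall n f, sumR (S n) f = sumR n f + f n.
Proof.
  intros. unfold sumR. rewrite seq_S, map_app, fold_right_app. simpl.
  rewrite fold_Rplus_shift. lra.
Qed.

Lemma sumR_ext : forall n f g, (forall i, (i < n)%nat -> f i = g i) -> sumR n f = sumR n g.
Proof.
  induction n; intros; [reflexivity|]. rewrite !sumR_S. rewrite (IHn f g) by (intros; apply H; lia).
  rewrite (H n) by lia. reflexivity.
Qed.

Lemma sumR_lin : forall n a b f g, sumR n (fun i => a * f i + b * g i) = a * sumR n f + b * sumR n g.
Proof. induction n; intros; [rewrite !sumR_0; lra|]. rewrite !sumR_S, IHn. lra. Qed.

Lemma sumR_plus : forall n f g, sumR n (fun i => f i + g i) = sumR n f + sumR n g.
Proof. induction n; intros; [rewrite !sumR_0; lra|]. rewrite !sumR_S, IHn. lra. Qed.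

Lemma sumR_const : forall n c, sumR n (fun _ => c) = INR n * c.
Proof. induction n; intros; [rewrite sumR_0; simpl; lra|]. rewrite sumR_S, IHn, S_INR. lra. Qed.

Definition ind (a : nat) (v : R) : nat -> R := fun i => if Nat.eqb i a then v else 0.

Lemma sumR_ind : forall n a v, (a < n)%nat -> sumR n (ind a v) = v.
Proof.
  induction n; intros; [lia|]. rewrite sumR_S. unfold ind at 2.
  destruct (Nat.eq_dec a n).
  - subst. rewrite Nat.eqb_refl.
    assert (sumR n (ind n v) = 0).
    { clear IHn H. assert (forall m, (m <= n)%nat -> sumR m (ind n v) = 0).
      { induction m; intros; [reflexivity|]. rewrite sumR_S, IHm by lia. unfold ind.
        destruct (Nat.eqb_spec m n); [lia|lra]. }
      apply H; lia. }
    lra.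
  - rewrite IHn by lia. destruct (Nat.eqb_spec n a); [lia|lra].
Qed.

Lemma sumR_nonneg : forall n f, (forall i, 0 <= f i) -> 0 <= sumR n f.
Proof. induction n; intros; [rewrite sumR_0; lra|]. rewrite sumR_S. specialize (IHn f H). specialize (H n). lra. Qed.

Lemma sumR_bound : forall n f i, (forall i, 0 <= f i) -> (i < n)%nat -> f i <= sumR n f.
Proof.
  induction n; intros; [lia|]. rewrite sumR_S. destruct (Nat.eq_dec i n).
  - subst. pose proof (sumR_nonneg n f H). lra.
  - specialize (IHn f i H ltac:(lia)). specialize (H n). lra.
Qed.

Lemma ind_at : forall a v, ind a v a = v.
Proof. intros. unfold ind. rewrite Nat.eqb_refl. reflexivity. Qed.
Lemma ind_off : forall a v i, i <> a -> ind a v i = 0.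
Proof. intros. unfold ind. destruct (Nat.eqb_spec i a); [lia|reflexivity]. Qed.

Definition cc (t : R) (x y : nat -> R) : nat -> R := fun i => (1 - t) * x i + t * y i.

Lemma inV_cc : forall n t x y, inV n x -> inV n y -> inV n (cc t x y).
Proof.
  intros n t x y [Hx1 Hx2] [Hy1 Hy2]. split.
  - intros i Hi. unfold cc. rewrite Hx1, Hy1 by auto. ring.
  - unfold cc. rewrite sumR_lin, Hx2, Hy2. ring.
Qed.

Lemma inV_add : forall n x y, inV n x -> inV n y -> inV n (fun i => x i + y i).
Proof.
  intros n x y [Hx1 Hx2] [Hy1 Hy2]. split.
  - intros i Hi. rewrite Hx1, Hy1 by auto. ring.
  - rewrite sumR_plus, Hx2, Hy2. ring.
Qed.

Lemma inV_ind3 : forall n a b c va vb vc, (a < n)%nat -> (b < n)%nat -> (c < n)%nat ->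
  va + vb + vc = 0 -> inV n (fun i => ind a va i + ind b vb i + ind c vc i).
Proof.
  intros. split.
  - intros. rewrite !ind_off by lia. ring.
  - rewrite sumR_plus, sumR_plus, !sumR_ind by auto. lra.
Qed.

Definition center (n : nat) (f : nat -> R) : nat -> R :=
  fun i => if Nat.ltb i n then f i - sumR n f / INR n else 0.

Lemma center_inV : forall n f, (0 < n)%nat -> inV n (center n f).
Proof.
  intros. split.
  - intros. unfold center. destruct (Nat.ltb_spec i n); [lia|reflexivity].
  - rewrite (sumR_ext n _ (fun i => 1 * f i + (- (sumR n f / INR n)) * 1)).
    + rewrite sumR_lin, sumR_const. field. apply not_0_INR. lia.
    + intros. unfold center. destruct (Nat.ltb_spec i n); [ring|lia].
Qed.

Lemma center_diff : forall n f i j, (i < n)%nat -> (j < n)%nat ->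
  center n f i - center n f j = f i - f j.
Proof.
  intros. unfold center. destruct (Nat.ltb_spec i n); [|lia].
  destruct (Nat.ltb_spec j n); [ring|lia].
Qed.

Lemma center_eq : forall n f i j, (i < n)%nat -> (j < n)%nat ->
  (center n f i = center n f j <-> f i = f j).
Proof. intros. pose proof (center_diff n f i j H H0). split; intros; lra. Qed.

Lemma center_lt : forall n f i j, (i < n)%nat -> (j < n)%nat ->
  (center n f i < center n f j <-> f i < f j).
Proof. intros. pose proof (center_diff n f i j H H0). split; intros; lra. Qed.

Lemma path_straight : forall n (S : (nat -> R) -> Prop) x y,
  (forall t, 0 <= t <= 1 -> S (cc t x y)) -> path_in n S x y.
Proof.
  intros. exists (fun t => cc t x y). repeat split.
  - apply functional_extensionality. intros. unfold cc. ring.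
  - apply functional_extensionality. intros. unfold cc. ring.
  - auto.
  - intros. unfold cc. reg.
Qed.

Lemma closure_le : forall n (P : (nat -> R) -> Prop) x a b,
  closure n P x -> (forall y, P y -> y a <= y b) -> (a < n)%nat -> (b < n)%nat -> x a <= x b.
Proof.
  intros n P x a b [_ Hc] HP Ha Hb.
  destruct (Rle_dec (x a) (x b)) as [|Hn]; auto.
  destruct (Hc ((x a - x b) / 2)) as [y [Py Hy]]; [lra|].
  pose proof (HP y Py). pose proof (Hy a Ha). pose proof (Hy b Hb).
  apply Rabs_def2 in H0. apply Rabs_def2 in H1. lra.
Qed.

Lemma closure_approx : forall n (P : (nat -> R) -> Prop) x p,
  inV n x -> (forall s, 0 < s <= 1 -> P (cc s x p)) -> closure n P x.
Proof.
  intros n P x p Hx HP. split; auto. intros eps Heps.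
  set (M := 1 + sumR n (fun i => Rabs (p i - x i))).
  assert (HM : 1 <= M). { unfold M. pose proof (sumR_nonneg n (fun i => Rabs (p i - x i))).
    assert (forall i, 0 <= Rabs (p i - x i)) by (intros; apply Rabs_pos). specialize (H H0). lra. }
  set (s := Rmin 1 (eps / (2 * M))).
  assert (Hs1 : 0 < s). { unfold s. apply Rmin_glb_lt; [lra|]. apply Rdiv_lt_0_compat; lra. }
  assert (Hs2 : s <= 1) by (unfold s; apply Rmin_l).
  assert (Hs3 : s <= eps / (2 * M)) by (unfold s; apply Rmin_r).
  exists (cc s x p). split; [apply HP; lra|].
  intros i Hi. unfold cc.
  replace (x i - ((1 - s) * x i + s * p i)) with (- (s * (p i - x i))) by ring.
  rewrite Rabs_Ropp, Rabs_mult, (Rabs_right s) by lra.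
  assert (Hb : Rabs (p i - x i) < M).
  { unfold M. pose proof (sumR_bound n (fun i => Rabs (p i - x i)) i ltac:(intros; apply Rabs_pos) Hi). simpl in H. lra. }
  assert (s * Rabs (p i - x i) <= eps / (2 * M) * M).
  { apply Rmult_le_compat; try lra; apply Rabs_pos. }
  replace (eps / (2 * M) * M) with (eps / 2) in H by (field; lra). lra.
Qed.

Lemma sign_pres : forall n (S : (nat -> R) -> Prop) x y a b,
  path_in n S x y -> (forall z, S z -> z a <> z b) -> (a < n)%nat -> (b < n)%nat ->
  x a < x b -> y a < y b.
Proof.
  intros n S x y a b [g [Hg0 [Hg1 [HgS Hgc]]]] HS Ha Hb Hxy.
  destruct (Rlt_dec (y a) (y b)) as [|Hn]; auto. exfalso.
  assert (Hne : y a <> y b) by (rewrite <- Hg1; apply HS, HgS; lra).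
  destruct (IVT_interv (fun s => g s a - g s b) 0 1) as [z [Hz Hz0]].
  - intros t Ht. apply (continuity_pt_minus (fun s => g s a) (fun s => g s b)); auto.
  - lra.
  - simpl. rewrite Hg0. lra.
  - simpl. rewrite Hg1. lra.
  - apply (HS (g z)); [apply HgS; lra|]. lra.
Qed.

Definition strictR (n : nat) (Cs Es : nat -> nat -> Prop) (x : nat -> R) : Prop :=
  inV n x /\ (forall a b, Cs a b -> x a < x b) /\ (forall a b, Es a b -> x a = x b).
Definition closedR (n : nat) (Cs Es : nat -> nat -> Prop) (x : nat -> R) : Prop :=
  inV n x /\ (forall a b, Cs a b -> x a <= x b) /\ (forall a b, Es a b -> x a = x b).

Lemma strictR_cc : forall n Cs Es x y t, strictR n Cs Es x -> strictR n Cs Es y -> 0 <= t <= 1 ->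
  strictR n Cs Es (cc t x y).
Proof.
  intros n Cs Es x y t [Hx1 [Hx2 Hx3]] [Hy1 [Hy2 Hy3]] Ht. split; [apply inV_cc; auto|]. split.
  - intros a b H. specialize (Hx2 a b H). specialize (Hy2 a b H). unfold cc.
    assert (0 <= (1-t)*(x b - x a)) by (apply Rmult_le_pos; lra).
    assert (0 <= t*(y b - y a)) by (apply Rmult_le_pos; lra).
    destruct (Rle_lt_dec t 0).
    + assert (0 < (1-t)*(x b - x a)) by (apply Rmult_lt_0_compat; lra). lra.
    + assert (0 < t*(y b - y a)) by (apply Rmult_lt_0_compat; lra). lra.
  - intros a b H. unfold cc. rewrite (Hx3 a b H), (Hy3 a b H). reflexivity.
Qed.

Lemma closedR_cc : forall n Cs Es x p s, closedR n Cs Es x -> strictR n Cs Es p -> 0 < s <= 1 ->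
  strictR n Cs Es (cc s x p).
Proof.
  intros n Cs Es x y t [Hx1 [Hx2 Hx3]] [Hy1 [Hy2 Hy3]] Ht. split; [apply inV_cc; auto|]. split.
  - intros a b H. specialize (Hx2 a b H). specialize (Hy2 a b H). unfold cc.
    assert (0 <= (1-t)*(x b - x a)) by (apply Rmult_le_pos; lra).
    assert (0 < t*(y b - y a)) by (apply Rmult_lt_0_compat; lra). lra.
  - intros a b H. unfold cc. rewrite (Hx3 a b H), (Hy3 a b H). reflexivity.
Qed.

Lemma comp_char : forall n Cs Es (S : (nat -> R) -> Prop) p,
  (forall x, strictR n Cs Es x -> S x) ->
  (forall x, S x -> inV n x /\ (forall a b, Cs a b -> x a <> x b) /\ (forall a b, Es a b -> x a = x b)) ->
  (forall a b, Cs a b -> (a < n)%nat /\ (b < n)%nat) ->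
  strictR n Cs Es p ->
  forall y, component n S p y <-> strictR n Cs Es y.
Proof.
  intros n Cs Es S p HS1 HS2 Hidx Hp y. split.
  - intros [Sy Hpath]. destruct (HS2 y Sy) as [Hy1 [_ Hy3]]. split; auto. split; auto.
    intros a b Hab. destruct (Hidx a b Hab).
    apply (sign_pres n S p y a b Hpath); auto.
    + intros z Sz. apply (HS2 z Sz); auto.
    + apply Hp; auto.
  - intros Hy. split; [apply HS1; auto|]. apply path_straight. intros. apply HS1.
    apply strictR_cc; auto.
Qed.

Lemma closure_comp : forall n Cs Es (S : (nat -> R) -> Prop) p,
  (forall x, strictR n Cs Es x -> S x) ->
  (forall x, S x -> inV n x /\ (forall a b, Cs a b -> x a <> x b) /\ (forall a b, Es a b -> x a = x b)) ->
  (forall a b, Cs a b -> (a < n)%nat /\ (b < n)%nat) ->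
  (forall a b, Es a b -> (a < n)%nat /\ (b < n)%nat) ->
  strictR n Cs Es p ->
  forall x, closure n (component n S p) x <-> closedR n Cs Es x.
Proof.
  intros n Cs Es S p HS1 HS2 Hidx Hidx2 Hp x.
  pose proof (comp_char n Cs Es S p HS1 HS2 Hidx Hp) as Hc. split.
  - intros Hcl. split; [apply Hcl|]. split.
    + intros a b Hab. destruct (Hidx a b Hab). apply (closure_le n _ x a b Hcl); auto.
      intros y Hy. apply Hc in Hy. left. apply Hy; auto.
    + intros a b Hab. destruct (Hidx2 a b Hab). apply Rle_antisym.
      * apply (closure_le n _ x a b Hcl); auto. intros y Hy. apply Hc in Hy. right. apply Hy; auto.
      * apply (closure_le n _ x b a Hcl); auto. intros y Hy. apply Hc in Hy. right. symmetry. apply Hy; auto.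
  - intros Hx. apply (closure_approx n _ x p); [apply Hx|]. intros s Hs. apply Hc.
    apply closedR_cc; auto.
Qed.

Lemma closure_ext : forall n (P Q : (nat -> R) -> Prop), (forall x, P x <-> Q x) ->
  forall x, closure n P x <-> closure n Q x.
Proof.
  intros. unfold closure. split; intros [H1 H2]; split; auto; intros eps He;
  destruct (H2 eps He) as [y [Hy1 Hy2]]; exists y; split; auto; apply H; auto.
Qed.

Lemma hasFacetIn_ext : forall n (C D : (nat -> R) -> Prop) K, (forall x, C x <-> D x) ->
  hasFacetIn n C K <-> hasFacetIn n D K.
Proof.
  intros. unfold hasFacetIn. split; intros [p [H1 [H2 [H3 [eps [He H4]]]]]].
  - exists p. split; [auto|]. split; [auto|]. split; [apply H; auto|].
    exists eps. split; [auto|]. intros; apply H; auto.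
  - exists p. split; [auto|]. split; [auto|]. split; [apply H; auto|].
    exists eps. split; [auto|]. intros; apply H; auto.
Qed.
Open Scope R_scope.

Definition inT (a b c : nat) (K : hyp) : Prop := K = (a,b) \/ K = (b,c) \/ K = (a,c).
Definition disjH (H1 H2 : hyp) : Prop :=
  fst H1 <> fst H2 /\ fst H1 <> snd H2 /\ snd H1 <> fst H2 /\ snd H1 <> snd H2.

Lemma pair_cases : forall n H1 H2, validH n H1 -> validH n H2 -> H1 <> H2 ->
  disjH H1 H2 \/ exists a b c, (a < b < c)%nat /\ (c < n)%nat /\ inT a b c H1 /\ inT a b c H2.
Proof.
  intros n [u v] [s t] Hv1 Hv2 Hne. unfold validH, disjH, inT in *; simpl in *.
  destruct (Nat.eq_dec u s); [|destruct (Nat.eq_dec u t); [|destruct (Nat.eq_dec v s); [|destruct (Nat.eq_dec v t)]]].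
  - subst. right. destruct (Nat.lt_total v t) as [Hl|[He|Hl]].
    + exists s, v, t. repeat split; try lia; [left; reflexivity| right; right; reflexivity].
    + subst. congruence.
    + exists s, t, v. repeat split; try lia; [right; right; reflexivity| left; reflexivity].
  - subst. right. exists s, t, v. repeat split; try lia; [right; left; reflexivity| left; reflexivity].
  - subst. right. exists u, s, t. repeat split; try lia; [left; reflexivity| right; left; reflexivity].
  - subst. right. destruct (Nat.lt_total u s) as [Hl|[He|Hl]].
    + exists u, s, t. repeat split; try lia; [right; right; reflexivity| right; left; reflexivity].
    + subst. congruence.
    + exists s, u, t. repeat split; try lia; [right; left; reflexivity| right; right; reflexivity].
  - left. repeat split; auto.
Qed.

Definition fT (a b c : nat) : nat -> R :=
  fun i => if (Nat.eqb i a || Nat.eqb i b || Nat.eqb i c)%bool then 0 else INR (S i).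

Lemma fT_cases : forall a b c i,
  ((i = a \/ i = b \/ i = c) /\ fT a b c i = 0) \/ (i <> a /\ i <> b /\ i <> c /\ fT a b c i = INR (S i)).
Proof.
  intros. unfold fT. destruct (Nat.eqb_spec i a); destruct (Nat.eqb_spec i b); destruct (Nat.eqb_spec i c);
  simpl; auto.
Qed.

Lemma INR_S_pos : forall i, 0 < INR (S i).
Proof. intros. rewrite S_INR. pose proof (pos_INR i). lra. Qed.

Lemma inA2_triple : forall n a b c H1 H2, (a < b < c)%nat -> (c < n)%nat ->
  inT a b c H1 -> inT a b c H2 -> H1 <> H2 ->
  forall K, inA2 n H1 H2 K <-> inT a b c K.
Proof.
  intros n a b c H1 H2 Habc Hc HT1 HT2 Hne K. split.
  - intros [HK Hall]. destruct K as [u v]. unfold validH in HK; simpl in HK.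
    set (x := center n (fT a b c)).
    assert (Hx : inV n x) by (apply center_inV; lia).
    assert (Hon : forall p q, (p = a \/ p = b \/ p = c) -> (q = a \/ q = b \/ q = c) -> x p = x q).
    { intros p q Hp Hq. unfold x. apply center_eq; try lia.
      destruct (fT_cases a b c p) as [[_ E1]|[? [? [? _]]]]; [|lia].
      destruct (fT_cases a b c q) as [[_ E2]|[? [? [? _]]]]; [|lia]. lra. }
    assert (HonT : forall K, inT a b c K -> onH K x).
    { intros K' [ -> | [ -> | -> ] ]; unfold onH; simpl; apply Hon; auto. }
    specialize (Hall x Hx (HonT _ HT1) (HonT _ HT2)). unfold onH in Hall; simpl in Hall.
    unfold x in Hall. apply center_eq in Hall; try lia.
    destruct (fT_cases a b c u) as [[Hu E1]|[? [? [? E1]]]];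
    destruct (fT_cases a b c v) as [[Hv E2]|[? [? [? E2]]]].
    + unfold inT. destruct Hu as [ -> | [ -> | -> ] ]; destruct Hv as [ -> | [ -> | -> ] ]; try lia; auto.
    + pose proof (INR_S_pos v). lra.
    + pose proof (INR_S_pos u). lra.
    + rewrite E1, E2 in Hall. apply INR_eq in Hall. lia.
  - intros HK. split.
    + unfold validH. destruct HK as [ -> | [ -> | -> ] ]; simpl; lia.
    + intros x _ Hx1 Hx2. unfold inT in *. unfold onH in *.
      destruct HT1 as [ -> | [ -> | -> ] ]; destruct HT2 as [ -> | [ -> | -> ] ]; try congruence;
      destruct HK as [ -> | [ -> | -> ] ]; simpl in *; congruence.
Qed.

Definition fD (a b c d : nat) : nat -> R :=
  fun i => if (Nat.eqb i a || Nat.eqb i b)%bool then 0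
           else if (Nat.eqb i c || Nat.eqb i d)%bool then -1 else INR (S i).

Lemma fD_cases : forall a b c d i,
  ((i = a \/ i = b) /\ fD a b c d i = 0) \/
  (i <> a /\ i <> b /\ (i = c \/ i = d) /\ fD a b c d i = -1) \/
  (i <> a /\ i <> b /\ i <> c /\ i <> d /\ fD a b c d i = INR (S i)).
Proof.
  intros. unfold fD. destruct (Nat.eqb_spec i a); destruct (Nat.eqb_spec i b);
  destruct (Nat.eqb_spec i c); destruct (Nat.eqb_spec i d); simpl; auto 10.
Qed.

Lemma inA2_disj : forall n H1 H2, validH n H1 -> validH n H2 -> disjH H1 H2 ->
  forall K, inA2 n H1 H2 K <-> K = H1 \/ K = H2.
Proof.
  intros n [a b] [c d] Hv1 Hv2 Hd K. unfold validH, disjH in *; simpl in *. split.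
  - intros [HK Hall]. destruct K as [u v]. unfold validH in HK; simpl in HK.
    set (x := center n (fD a b c d)).
    assert (Hx : inV n x) by (apply center_inV; lia).
    assert (E1 : onH (a,b) x).
    { unfold onH, x; simpl. apply center_eq; try lia.
      destruct (fD_cases a b c d a) as [[_ G1]|[[? _]|[? _]]]; [|lia|lia].
      destruct (fD_cases a b c d b) as [[_ G2]|[[_ [? _]]|[_ [? _]]]]; [|lia|lia]. lra. }
    assert (E2 : onH (c,d) x).
    { unfold onH, x; simpl. apply center_eq; try lia.
      destruct (fD_cases a b c d c) as [[[?|?] _]|[[_ [_ [_ G1]]]|[_ [_ [? _]]]]]; [lia|lia| |lia].
      destruct (fD_cases a b c d d) as [[[?|?] _]|[[_ [_ [_ G2]]]|[_ [_ [_ [? _]]]]]]; [lia|lia| |lia]. lra. }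
    specialize (Hall x Hx E1 E2). unfold onH in Hall; simpl in Hall.
    unfold x in Hall. apply center_eq in Hall; try lia.
    pose proof (INR_S_pos u). pose proof (INR_S_pos v).
    destruct (fD_cases a b c d u) as [[Hu F1]|[[? [? [Hu F1]]]|[? [? [? [? F1]]]]]];
    destruct (fD_cases a b c d v) as [[Hv F2]|[[? [? [Hv F2]]]|[? [? [? [? F2]]]]]];
    rewrite F1, F2 in Hall; try lra.
    + left. destruct Hu as [ ->| ->]; destruct Hv as [ ->| ->]; try lia; reflexivity.
    + right. destruct Hu as [ ->| ->]; destruct Hv as [ ->| ->]; try lia; reflexivity.
    + apply INR_eq in Hall. lia.
  - intros HK. split.
    + unfold validH. destruct HK as [ ->| ->]; simpl; lia.
    + intros x _ Hx1 Hx2. destruct HK as [ ->| ->]; auto.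
Qed.

Definition Cs2 (u1 v1 u2 v2 : nat) : nat -> nat -> Prop :=
  fun a b => (a = u1 /\ b = v1) \/ (a = u2 /\ b = v2).
Definition Es0 : nat -> nat -> Prop := fun _ _ => False.

Lemma inB_center : forall n, (0 < n)%nat -> inB n (center n INR).
Proof.
  intros. split; [apply center_inV; auto|]. intros i j Hij.
  apply center_lt; try lia. apply lt_INR. lia.
Qed.

Lemma Bprime_gen : forall n H1 H2 u1 v1 u2 v2 (Kset : hyp -> Prop),
  (u1 < v1 < n)%nat -> (u2 < v2 < n)%nat ->
  (forall K, inA2 n H1 H2 K <-> Kset K) -> Kset (u1,v1) -> Kset (u2,v2) ->
  (forall x, strictR n (Cs2 u1 v1 u2 v2) Es0 x -> forall K, Kset K -> ~ onH K x) ->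
  forall x, closure n (Bprime n H1 H2) x <-> closedR n (Cs2 u1 v1 u2 v2) Es0 x.
Proof.
  intros n H1 H2 u1 v1 u2 v2 Kset Hu1 Hu2 HK Hk1 Hk2 Hs.
  set (S := complA2 n H1 H2).
  assert (HS1 : forall x, strictR n (Cs2 u1 v1 u2 v2) Es0 x -> S x).
  { intros x Hx. split; [apply Hx|]. intros K HKx. apply (Hs x Hx). apply HK; auto. }
  assert (HS2 : forall x, S x -> inV n x /\ (forall a b, Cs2 u1 v1 u2 v2 a b -> x a <> x b) /\
                 (forall a b, Es0 a b -> x a = x b)).
  { intros x [Hx1 Hx2]. split; auto. split; [|intros a b []].
    intros a b [[ -> ->]|[ -> ->]].
    - intros E. apply (Hx2 (u1,v1)); [apply HK; auto|exact E].
    - intros E. apply (Hx2 (u2,v2)); [apply HK; auto|exact E]. }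
  assert (Hidx : forall a b, Cs2 u1 v1 u2 v2 a b -> (a < n)%nat /\ (b < n)%nat).
  { intros a b [[ -> ->]|[ -> ->]]; lia. }
  assert (HB : forall b, inB n b -> strictR n (Cs2 u1 v1 u2 v2) Es0 b).
  { intros b [Hb1 Hb2]. split; auto. split; [|intros a c []].
    intros a c [[ -> ->]|[ -> ->]]; apply Hb2; lia. }
  assert (Hn : (0 < n)%nat) by lia.
  set (b0 := center n INR).
  assert (Hb0 : strictR n (Cs2 u1 v1 u2 v2) Es0 b0) by (apply HB, inB_center; auto).
  pose proof (comp_char n _ _ S b0 HS1 HS2 Hidx Hb0) as Hc.
  intros x. rewrite <- (closure_comp n _ _ S b0 HS1 HS2 Hidx (fun a b H => match H with end) Hb0 x).
  apply closure_ext. intros y. split.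
  - intros [b [Hb Hcomp]]. apply Hc. apply (comp_char n _ _ S b HS1 HS2 Hidx (HB b Hb)). exact Hcomp.
  - intros Hy. exists b0. split; [apply inB_center; auto|]. exact Hy.
Qed.

Ltac indval := cbv beta; unfold ind; cbv beta; repeat match goal with |- context [Nat.eqb ?x ?y] => destruct (Nat.eqb_spec x y) end; try lia; try lra.

Lemma facet_gen : forall n Cs u v (p : nat -> R),
  inV n p -> p u = p v -> (u < n)%nat -> (v < n)%nat ->
  (forall a b, Cs a b -> (a < n)%nat /\ (b < n)%nat) ->
  (forall a b, Cs a b -> (a = u /\ b = v) \/ (p a + 1 <= p b - 1)) ->
  hasFacetIn n (closedR n Cs Es0) (u,v).
Proof.
  intros n Cs u v p Hp Huv Hu Hv Hidx HC. exists p. split; [auto|]. split; [exact Huv|].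
  split.
  - split; [auto|]. split; [|intros a b []]. intros a b Hab.
    destruct (HC a b Hab) as [[-> ->]|H]; lra.
  - exists 1. split; [lra|]. intros q Hq Hqon Hqd. split; [auto|]. split; [|intros a b []].
    intros a b Hab. destruct (HC a b Hab) as [[-> ->]|H]; [unfold onH in Hqon; simpl in Hqon; lra|].
    destruct (Hidx a b Hab). pose proof (Hqd a H0) as Ha. pose proof (Hqd b H1) as Hb.
    apply Rabs_def2 in Ha. apply Rabs_def2 in Hb. lra.
Qed.

Lemma triple_basic_ab : forall n a b c, (a < b < c)%nat -> (c < n)%nat ->
  hasFacetIn n (closedR n (Cs2 a b b c) Es0) (a,b).
Proof.
  intros. apply (facet_gen n _ a b (fun i => ind a (-1) i + ind b (-1) i + ind c 2 i)).
  - apply inV_ind3; try lia; lra.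
  - indval.
  - lia.
  - lia.
  - intros x y [[-> ->]|[-> ->]]; lia.
  - intros x y [[-> ->]|[-> ->]]; [left; auto|right; indval].
Qed.

Lemma triple_basic_bc : forall n a b c, (a < b < c)%nat -> (c < n)%nat ->
  hasFacetIn n (closedR n (Cs2 a b b c) Es0) (b,c).
Proof.
  intros. apply (facet_gen n _ b c (fun i => ind a (-2) i + ind b 1 i + ind c 1 i)).
  - apply inV_ind3; try lia; lra.
  - indval.
  - lia.
  - lia.
  - intros x y [[-> ->]|[-> ->]]; lia.
  - intros x y [[-> ->]|[-> ->]]; [right; indval|left; auto].
Qed.

Lemma disj_basic1 : forall n a b c d, (a < b < n)%nat -> (c < d < n)%nat ->
  a <> c -> a <> d -> b <> c -> b <> d ->
  hasFacetIn n (closedR n (Cs2 a b c d) Es0) (a,b).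
Proof.
  intros. apply (facet_gen n _ a b (fun i => ind c (-1) i + ind d 1 i + ind a 0 i)).
  - apply inV_ind3; try lia. lra.
  - indval.
  - lia.
  - lia.
  - intros x y [[-> ->]|[-> ->]]; lia.
  - intros x y [[-> ->]|[-> ->]]; [left; auto|right; indval].
Qed.

Lemma disj_basic2 : forall n a b c d, (a < b < n)%nat -> (c < d < n)%nat ->
  a <> c -> a <> d -> b <> c -> b <> d ->
  hasFacetIn n (closedR n (Cs2 a b c d) Es0) (c,d).
Proof.
  intros. apply (facet_gen n _ c d (fun i => ind a (-1) i + ind b 1 i + ind c 0 i)).
  - apply inV_ind3; try lia. lra.
  - indval.
  - lia.
  - lia.
  - intros x y [[-> ->]|[-> ->]]; lia.
  - intros x y [[-> ->]|[-> ->]]; [right; indval|left; auto].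
Qed.

Lemma triple_nonbasic : forall n a b c, (a < b < c)%nat -> (c < n)%nat ->
  ~ hasFacetIn n (closedR n (Cs2 a b b c) Es0) (a,c).
Proof.
  intros n a b c Habc Hc [p [Hp [Hpon [[_ [Hpc _]] [eps [He Hq]]]]]].
  unfold onH in Hpon; simpl in Hpon.
  pose proof (Hpc a b (or_introl (conj eq_refl eq_refl))) as Hab.
  set (dl := eps / 4).
  set (q := fun i => p i + (ind a (-dl) i + ind b (2*dl) i + ind c (-dl) i)).
  assert (Hqv : inV n q) by (apply inV_add; auto; apply inV_ind3; try lia; lra).
  assert (Hqa : q a = p a - dl) by (unfold q; indval).
  assert (Hqb : q b = p b + 2 * dl) by (unfold q; indval).
  assert (Hqc : q c = p c - dl) by (unfold q; indval).
  assert (Hqon : onH (a,c) q) by (unfold onH; simpl; lra).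
  destruct (Hq q Hqv Hqon) as [_ [Hqc2 _]].
  - intros i Hi. unfold q; cbv beta.
    replace (p i + (ind a (- dl) i + ind b (2 * dl) i + ind c (- dl) i) - p i)
      with (ind a (- dl) i + ind b (2 * dl) i + ind c (- dl) i) by ring.
    unfold dl. indval; apply Rabs_def1; lra.
  - pose proof (Hqc2 b c (or_intror (conj eq_refl eq_refl))). unfold dl in *. lra.
Qed.

Lemma triple_facts : forall n a b c H1 H2, (a < b < c)%nat -> (c < n)%nat ->
  inT a b c H1 -> inT a b c H2 -> H1 <> H2 ->
  (forall K, inA2 n H1 H2 K <-> inT a b c K) /\ basic n H1 H2 (a,b) /\ basic n H1 H2 (b,c) /\
  ~ basic n H1 H2 (a,c).
Proof.
  intros n a b c H1 H2 Habc Hc HT1 HT2 Hne.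
  pose proof (inA2_triple n a b c H1 H2 Habc Hc HT1 HT2 Hne) as HA.
  assert (HB : forall x, closure n (Bprime n H1 H2) x <-> closedR n (Cs2 a b b c) Es0 x).
  { apply (Bprime_gen n H1 H2 a b b c (inT a b c)); try lia; auto.
    - left; reflexivity.
    - right; left; reflexivity.
    - intros x [_ [Hx _]] K [ -> | [ -> | -> ] ]; unfold onH; simpl.
      + pose proof (Hx a b (or_introl (conj eq_refl eq_refl))). lra.
      + pose proof (Hx b c (or_intror (conj eq_refl eq_refl))). lra.
      + pose proof (Hx a b (or_introl (conj eq_refl eq_refl))).
        pose proof (Hx b c (or_intror (conj eq_refl eq_refl))). lra. }
  split; [exact HA|]. split; [|split].
  - split; [apply HA; left; reflexivity|]. rewrite (hasFacetIn_ext n _ _ _ HB). apply triple_basic_ab; auto.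
  - split; [apply HA; right; left; reflexivity|]. rewrite (hasFacetIn_ext n _ _ _ HB). apply triple_basic_bc; auto.
  - intros [_ Hf]. rewrite (hasFacetIn_ext n _ _ _ HB) in Hf. apply (triple_nonbasic n a b c); auto.
Qed.

Lemma disj_facts : forall n H1 H2, validH n H1 -> validH n H2 -> disjH H1 H2 ->
  basic n H1 H2 H1 /\ basic n H1 H2 H2 /\ (forall K, inA2 n H1 H2 K <-> K = H1 \/ K = H2).
Proof.
  intros n [a b] [c d] Hv1 Hv2 Hd.
  pose proof (inA2_disj n (a,b) (c,d) Hv1 Hv2 Hd) as HA.
  unfold validH, disjH in *; simpl in *.
  assert (HB : forall x, closure n (Bprime n (a,b) (c,d)) x <-> closedR n (Cs2 a b c d) Es0 x).
  { apply (Bprime_gen n (a,b) (c,d) a b c d (fun K => K = (a,b) \/ K = (c,d))); try lia; auto.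
    intros x [_ [Hx _]] K [ -> | -> ]; unfold onH; simpl.
    + pose proof (Hx a b (or_introl (conj eq_refl eq_refl))). lra.
    + pose proof (Hx c d (or_intror (conj eq_refl eq_refl))). lra. }
  split; [|split; [|exact HA]].
  - split; [apply HA; left; reflexivity|]. rewrite (hasFacetIn_ext n _ _ _ HB). apply disj_basic1; tauto.
  - split; [apply HA; right; reflexivity|]. rewrite (hasFacetIn_ext n _ _ _ HB). apply disj_basic2; tauto.
Qed.

Lemma cuts_char : forall n K H, validH n H -> cuts n K H ->
  exists b, (fst H < b < snd H)%nat /\ (K = (fst H, b) \/ K = (b, snd H)).
Proof.
  intros n K H HvH [H1 [H2 [Hv1 [Hv2 [Hne [HinH [HnbH HbK]]]]]]].
  destruct (pair_cases n H1 H2 Hv1 Hv2 Hne) as [Hd|[a [b [c [Habc [Hc [HT1 HT2]]]]]]].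
  - destruct (disj_facts n H1 H2 Hv1 Hv2 Hd) as [B1 [B2 HA]].
    apply HA in HinH. destruct HinH; subst; contradiction.
  - destruct (triple_facts n a b c H1 H2 Habc Hc HT1 HT2 Hne) as [HA [Bab [Bbc Nac]]].
    pose proof HinH as HT. apply HA in HT.
    destruct HT as [ -> | [ -> | -> ] ]; try contradiction.
    pose proof (proj1 HbK) as HK. apply HA in HK. simpl.
    exists b. split; [lia|]. destruct HK as [ -> | [ -> | -> ] ]; auto. contradiction.
Qed.

Lemma cuts_intro : forall n i k j, (i < k < j)%nat -> (j < n)%nat -> cuts n (i,k) (i,j).
Proof.
  intros n i k j Hikj Hj.
  assert (HT1 : inT i k j (i,k)) by (left; reflexivity).
  assert (HT2 : inT i k j (k,j)) by (right; left; reflexivity).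
  assert (Hne : (i,k) <> (k,j)) by (intros E; inversion E; lia).
  destruct (triple_facts n i k j (i,k) (k,j) Hikj Hj HT1 HT2 Hne) as [HA [Bab [Bbc Nac]]].
  exists (i,k), (k,j). split; [unfold validH; simpl; lia|]. split; [unfold validH; simpl; lia|].
  split; [exact Hne|]. split; [apply HA; right; right; reflexivity|]. split; auto.
Qed.

Lemma shardDomain_char : forall n i j x, validH n (i,j) ->
  (shardDomain n (i,j) x <-> inV n x /\ x i = x j /\ forall k, (i < k < j)%nat -> x k <> x i).
Proof.
  intros n i j x Hv. unfold validH in Hv; simpl in Hv. split.
  - intros [Hx [Hon Hcut]]. split; auto. split; auto. intros k Hk E.
    apply (Hcut (i,k)); [unfold validH; simpl; lia| apply cuts_intro; lia| unfold onH; simpl; auto].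
  - intros [Hx [Hon Hk]]. split; auto. split; auto. intros K HK Hc Hon2.
    destruct (cuts_char n K (i,j) ltac:(unfold validH; simpl; lia) Hc) as [b [Hb [ -> | -> ]]];
    simpl in *; unfold onH in *; simpl in *; apply (Hk b); auto; congruence.
Qed.

Definition shardCs (i j : nat) (p : nat -> R) : nat -> nat -> Prop :=
  fun a b => ((i < a < j)%nat /\ p a < p i /\ b = i) \/ ((i < b < j)%nat /\ p i < p b /\ a = i).
Definition shardEs (i j : nat) : nat -> nat -> Prop := fun a b => a = i /\ b = j.

Lemma shard_char : forall n i j p x, validH n (i,j) -> shardDomain n (i,j) p ->
  (shard n (i,j) p x <-> inV n x /\ x i = x j /\
     forall k, (i < k < j)%nat -> (p k < p i -> x k <= x i) /\ (p i < p k -> x i <= x k)).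
Proof.
  intros n i j p x Hv Hp. pose proof Hv as Hv'. unfold validH in Hv'; simpl in Hv'.
  assert (Hsd := fun y => shardDomain_char n i j y Hv).
  assert (HS1 : forall y, strictR n (shardCs i j p) (shardEs i j) y -> shardDomain n (i,j) y).
  { intros y [Hy1 [Hy2 Hy3]]. apply Hsd. split; auto. split; [apply Hy3; split; auto|].
    intros k Hk. apply Hsd in Hp. destruct Hp as [_ [_ Hpk]]. specialize (Hpk k Hk).
    destruct (Rlt_dec (p k) (p i)).
    - assert (y k < y i) by (apply Hy2; left; auto). lra.
    - assert (p i < p k) by (destruct (Rtotal_order (p k) (p i)) as [?|[?|?]]; [contradiction|contradiction|lra]).
      assert (y i < y k) by (apply Hy2; right; repeat split; auto; lia). lra. }
  assert (HS2 : forall y, shardDomain n (i,j) y -> inV n y /\ (forall a b, shardCs i j p a b -> y a <> y b) /\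
               (forall a b, shardEs i j a b -> y a = y b)).
  { intros y Hy. apply Hsd in Hy. destruct Hy as [Hy1 [Hy2 Hy3]]. split; auto. split.
    - intros a b [[Ha [_ ->]]|[Hb [_ ->]]]; [apply Hy3; auto|]. intros E; apply (Hy3 b Hb); auto.
    - intros a b [-> ->]; auto. }
  assert (Hidx : forall a b, shardCs i j p a b -> (a < n)%nat /\ (b < n)%nat).
  { intros a b [[Ha [_ ->]]|[Hb [_ ->]]]; lia. }
  assert (Hidx2 : forall a b, shardEs i j a b -> (a < n)%nat /\ (b < n)%nat).
  { intros a b [-> ->]; lia. }
  assert (Hps : strictR n (shardCs i j p) (shardEs i j) p).
  { pose proof Hp as Hp2. apply Hsd in Hp2. destruct Hp2 as [Hp1 [Hp2 Hp3]]. split; auto. split.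
    - intros a b [[Ha [Hlt ->]]|[Hb [Hlt ->]]]; auto.
    - intros a b [-> ->]; auto. }
  unfold shard. rewrite (closure_comp n _ _ _ p HS1 HS2 Hidx Hidx2 Hps x). split.
  - intros [Hx1 [Hx2 Hx3]]. split; auto. split; [apply Hx3; split; auto|].
    intros k Hk. split; intros; apply Hx2; [left|right]; auto.
  - intros [Hx1 [Hx2 Hx3]]. split; auto. split.
    + intros a b [[Ha [Hlt ->]]|[Hb [Hlt ->]]]; apply (Hx3 _ ltac:(eassumption)); auto.
    + intros a b [-> ->]; auto.
Qed.
Open Scope nat_scope.

Lemma sameBlock_sym : forall w a b, sameBlock w a b -> sameBlock w b a.
Proof.
  intros w a b [p [q [Hp [Hq [Ha [Hb Hd]]]]]]. exists q, p. repeat split; auto.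
  intros k Hk. apply Hd. lia.
Qed.

Lemma sameBlock_refl : forall w a, In a w -> sameBlock w a a.
Proof.
  intros w a Ha. destruct (In_nth w a 0 Ha) as [p [Hp Hpa]].
  exists p, p. repeat split; auto. intros k Hk. lia.
Qed.

Lemma sameBlock_in : forall w a b, sameBlock w a b -> In a w /\ In b w.
Proof.
  intros w a b [p [q [Hp [Hq [Ha [Hb _]]]]]]. subst. split; apply nth_In; auto.
Qed.

Lemma leftOf_antisym : forall w a b, NoDup w -> leftOf w a b -> leftOf w b a -> False.
Proof.
  intros w a b Hnd [p [q [Hpq [Ha Hb]]]] [p' [q' [Hpq' [Hb' Ha']]]].
  rewrite NoDup_nth with (d := 0) in Hnd.
  assert (p = q') by (apply Hnd; try lia; congruence).
  assert (q = p') by (apply Hnd; try lia; congruence). lia.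
Qed.

Definition desc (L : list nat) : Prop :=
  forall k, S k < length L -> nth (S k) L 0 < nth k L 0.

Lemma sameBlock_app : forall B w, desc B ->
  (B <> [] -> w <> [] -> nth (length B - 1) B 0 < nth 0 w 0) ->
  forall a b, sameBlock (B ++ w) a b <-> (In a B /\ In b B) \/ sameBlock w a b.
Proof.
  intros B w HB Hj a b. split.
  - intros [p [q [Hp [Hq [Ha [Hb Hd]]]]]]. rewrite length_app in Hp, Hq.
    destruct (Nat.lt_ge_cases p (length B)); destruct (Nat.lt_ge_cases q (length B)).
    + left. rewrite app_nth1 in Ha, Hb by auto. subst. split; apply nth_In; auto.
    + exfalso. assert (HBn : B <> []) by (intros E; subst; simpl in *; lia).
      assert (Hwn : w <> []) by (intros E; subst; simpl in *; lia).
      specialize (Hd (length B - 1) ltac:(lia)). specialize (Hj HBn Hwn).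
      rewrite app_nth2 in Hd by lia. rewrite app_nth1 in Hd by lia.
      replace (S (length B - 1) - length B) with 0 in Hd by lia. lia.
    + exfalso. assert (HBn : B <> []) by (intros E; subst; simpl in *; lia).
      assert (Hwn : w <> []) by (intros E; subst; simpl in *; lia).
      specialize (Hd (length B - 1) ltac:(lia)). specialize (Hj HBn Hwn).
      rewrite app_nth2 in Hd by lia. rewrite app_nth1 in Hd by lia.
      replace (S (length B - 1) - length B) with 0 in Hd by lia. lia.
    + right. rewrite app_nth2 in Ha, Hb by auto.
      exists (p - length B), (q - length B). repeat split; try lia; auto.
      intros k Hk. specialize (Hd (k + length B) ltac:(lia)).
      rewrite !app_nth2 in Hd by lia.
      replace (S (k + length B) - length B) with (S k) in Hd by lia.
      replace (k + length B - length B) with k in Hd by lia. auto.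
  - intros [[Ha Hb]|[p [q [Hp [Hq [Ha [Hb Hd]]]]]]].
    + destruct (In_nth B a 0 Ha) as [p [Hp Hpa]]. destruct (In_nth B b 0 Hb) as [q [Hq Hqb]].
      exists p, q. rewrite length_app. repeat split; try lia.
      * rewrite app_nth1; auto.
      * rewrite app_nth1; auto.
      * intros k Hk. rewrite !app_nth1 by lia. apply HB. lia.
    + exists (p + length B), (q + length B). rewrite length_app. repeat split; try lia.
      * rewrite app_nth2 by lia. replace (p + length B - length B) with p by lia. auto.
      * rewrite app_nth2 by lia. replace (q + length B - length B) with q by lia. auto.
      * intros k Hk. rewrite !app_nth2 by lia.
        replace (S k - length B) with (S (k - length B)) by lia. apply Hd. lia.
Qed.

Lemma leftOf_app1 : forall B w a b, In a B -> In b w -> leftOf (B ++ w) a b.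
Proof.
  intros. destruct (In_nth B a 0 H) as [p [Hp Hpa]]. destruct (In_nth w b 0 H0) as [q [Hq Hqb]].
  exists p, (q + length B). rewrite length_app. repeat split; try lia.
  - rewrite app_nth1; auto.
  - rewrite app_nth2 by lia. replace (q + length B - length B) with q by lia. auto.
Qed.

Lemma leftOf_app2 : forall B w a b, leftOf w a b -> leftOf (B ++ w) a b.
Proof.
  intros B w a b [p [q [Hpq [Ha Hb]]]]. exists (p + length B), (q + length B).
  rewrite length_app. repeat split; try lia.
  - rewrite app_nth2 by lia. replace (p + length B - length B) with p by lia. auto.
  - rewrite app_nth2 by lia. replace (q + length B - length B) with q by lia. auto.
Qed.

Fixpoint dseq (N : nat) : list nat := match N with 0 => [] | S m => m :: dseq m end.

Lemma dseq_In : forall N x, In x (dseq N) <-> x < N.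
Proof. induction N; intros; simpl; [split; [tauto|lia]|]. rewrite IHN. lia. Qed.

Lemma dseq_SS : forall N, StronglySorted gt (dseq N).
Proof.
  induction N; simpl; constructor; auto. apply Forall_forall. intros x Hx. apply dseq_In in Hx. lia.
Qed.

Lemma dseq_NoDup : forall N, NoDup (dseq N).
Proof.
  induction N; simpl; constructor; auto. rewrite dseq_In. lia.
Qed.

Lemma SS_filter : forall (f : nat -> bool) L, StronglySorted gt L -> StronglySorted gt (filter f L).
Proof.
  induction L; intros H; simpl; auto. apply StronglySorted_inv in H. destruct H.
  destruct (f a); auto. constructor; auto. apply Forall_forall. intros x Hx.
  apply filter_In in Hx. rewrite Forall_forall in H0. apply H0. tauto.
Qed.

Lemma SS_desc : forall L, StronglySorted gt L -> desc L.
Proof.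
  induction L; intros H k Hk; simpl in *; [lia|]. apply StronglySorted_inv in H. destruct H as [H1 H2].
  destruct k.
  - destruct L; simpl in *; [lia|]. inversion H2; subst. auto.
  - apply IHL; auto. lia.
Qed.

Lemma SS_head : forall x L y, StronglySorted gt (x :: L) -> In y (x :: L) -> y <= x.
Proof.
  intros. apply StronglySorted_inv in H. destruct H. destruct H0; [lia|].
  rewrite Forall_forall in H1. specialize (H1 y H0). lia.
Qed.

Lemma SS_last : forall L c, StronglySorted gt L -> In c L -> nth (length L - 1) L 0 <= c.
Proof.
  induction L; intros c H Hc; [destruct Hc|]. apply StronglySorted_inv in H. destruct H as [H1 H2].
  destruct L as [|y L'].
  - simpl in *. destruct Hc; [lia|tauto].
  - replace (length (a :: y :: L') - 1) with (S (length (y :: L') - 1)) by (simpl; lia).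
    change (nth (S (length (y :: L') - 1)) (a :: y :: L') 0) with (nth (length (y :: L') - 1) (y :: L') 0).
    destruct Hc as [ <- | Hc].
    + rewrite Forall_forall in H2.
      assert (In (nth (length (y :: L') - 1) (y :: L') 0) (y :: L')) by (apply nth_In; simpl; lia).
      specialize (H2 _ H). lia.
    + apply IHL; auto.
Qed.

Definition dec (P : Prop) : bool := if excluded_middle_informative P then true else false.
Lemma dec_true : forall P, dec P = true <-> P.
Proof. intros. unfold dec. destruct (excluded_middle_informative P); split; auto; congruence. Qed.
Lemma dec_false : forall P, dec P = false <-> ~ P.
Proof. intros. unfold dec. destruct (excluded_middle_informative P); split; auto; try congruence; tauto. Qed.

Lemma filter_length_lt : forall (f : nat -> bool) l x, In x l -> f x = false -> length (filter f l) < length l.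
Proof.
  induction l; intros x Hx Hf; [destruct Hx|]. simpl. destruct Hx as [->|Hx].
  - rewrite Hf. pose proof (filter_length_le f l). lia.
  - specialize (IHl x Hx Hf). destruct (f a); simpl; lia.
Qed.

Definition upc (le : nat -> nat -> Prop) (R : list nat) : Prop :=
  forall x y, In x R -> le x y -> In y R.
Definition minl (le : nat -> nat -> Prop) (R : list nat) (c : nat) : Prop :=
  In c R /\ forall d, In d R -> le d c -> le c d.
Definition gtm (m0 : option nat) (h : nat) : Prop :=
  match m0 with None => True | Some m => m < h end.
Definition Jinv (le : nat -> nat -> Prop) (R : list nat) (m0 : option nat) : Prop :=
  forall g, minl le R g -> exists g', In g' R /\ le g g' /\ le g' g /\ gtm m0 g'.

Lemma exists_minl : forall (le : nat -> nat -> Prop), (forall x, le x x) ->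
  (forall x y z, le x y -> le y z -> le x z) ->
  forall L, L <> [] -> exists c, minl le L c.
Proof.
  intros le Hr Ht. induction L as [|x L IH]; intros Hne; [congruence|].
  destruct L as [|y L'].
  - exists x. split; [left; auto|]. intros d [ <- | []] _. apply Hr.
  - destruct (IH ltac:(congruence)) as [c' [Hc' Hm]].
    destruct (classic (le x c' /\ ~ le c' x)) as [[H1 H2]|Hn].
    + exists x. split; [left; auto|]. intros d [ <- | Hd] Hdx; [apply Hr|].
      apply (Ht _ c'); auto. apply Hm; auto. apply (Ht _ x); auto.
    + exists c'. split; [right; auto|]. intros d [ <- | Hd] Hdc; [|apply Hm; auto].
      destruct (classic (le c' x)); auto. exfalso. apply Hn. split; auto.
Qed.

Lemma least_nat : forall (P : nat -> Prop) m, P m -> exists c, P c /\ forall c', P c' -> c <= c'.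
Proof.
  intros P m. induction m as [m IH] using (well_founded_induction Wf_nat.lt_wf). intros Hm.
  destruct (classic (exists c', P c' /\ c' < m)) as [[c' [Hc' Hlt]]|Hn].
  - apply (IH c' Hlt Hc').
  - exists m. split; auto. intros c' Hc'. destruct (Nat.le_gt_cases m c'); auto.
    exfalso. apply Hn. exists c'. auto.
Qed.

Lemma greedy : forall (le : nat -> nat -> Prop) (N : nat),
  (forall x, le x x) -> (forall x y z, le x y -> le y z -> le x z) ->
  (forall c g, le c g -> ~ le g c -> exists e f f', le c e /\ le e c /\ le c f /\ ~ le f c /\
      le f g /\ le f f' /\ le f' f /\ e < f') ->
  forall k R m0, length R <= k -> NoDup R -> (forall x, In x R -> x < N) -> upc le R -> Jinv le R m0 ->
  exists w, Permutation w R /\ NoDup w /\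
    (forall a b, In a R -> In b R -> (sameBlock w a b <-> le a b /\ le b a)) /\
    (forall a b, In a R -> In b R -> le a b -> ~ le b a -> leftOf w a b) /\
    (forall h, hd_error w = Some h -> gtm m0 h).
Proof.
  intros le N Hr Ht Hstep k. induction k as [|k IH]; intros R m0 Hlen Hnd HN Hup HJ.
  - destruct R; simpl in Hlen; [|lia]. exists []. split; [constructor|]. split; [constructor|].
    split; [intros a b []|]. split; [intros a b []|]. intros h Hh; discriminate.
  - destruct (list_eq_dec Nat.eq_dec R []) as [->|HRne].
    { exists []. split; [constructor|]. split; [constructor|].
      split; [intros a b []|]. split; [intros a b []|]. intros h Hh; discriminate. }
    destruct (exists_minl le Hr Ht R HRne) as [c0 Hc0].
    destruct (least_nat (minl le R) c0 Hc0) as [c [Hc Hcleast]].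
    set (B := filter (fun d => dec (In d R /\ le c d /\ le d c)) (dseq N)).
    set (R' := filter (fun d => negb (dec (le c d /\ le d c))) R).
    assert (HB : forall x, In x B <-> In x R /\ le c x /\ le x c).
    { intros x. unfold B. rewrite filter_In, dec_true, dseq_In. split; [tauto|].
      intros H. split; auto. apply HN; tauto. }
    assert (HR' : forall x, In x R' <-> In x R /\ ~ (le c x /\ le x c)).
    { intros x. unfold R'. rewrite filter_In. rewrite Bool.negb_true_iff, dec_false. tauto. }
    assert (HcR : In c R) by apply Hc.
    assert (HcR' : ~ In c R') by (rewrite HR'; intros [_ H]; apply H; auto).
    assert (Hlen' : length R' <= k).
    { assert (length R' < length R); [|lia]. unfold R'. apply (filter_length_lt _ _ c HcR).
      rewrite Bool.negb_false_iff, dec_true. auto. }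
    assert (Hnd' : NoDup R') by (apply NoDup_filter; auto).
    assert (HN' : forall x, In x R' -> x < N) by (intros x Hx; apply HN; apply HR' in Hx; tauto).
    assert (Hemin : forall e, le c e -> le e c -> minl le R e).
    { intros e H1 H2. split; [apply (Hup c); auto|]. intros d Hd Hde.
      apply (Ht _ c); auto. apply Hc; auto. apply (Ht _ e); auto. }
    assert (Hup' : upc le R').
    { intros x y Hx Hxy. apply HR' in Hx. destruct Hx as [Hx Hnx]. apply HR'. split; [apply (Hup x); auto|].
      intros [H1 H2]. apply Hnx. split; [|apply (Ht _ y); auto].
      apply Hc; auto. apply (Ht _ y); auto. }
    assert (HJ' : Jinv le R' (Some c)).
    { intros g Hg. destruct (classic (minl le R g)) as [HgR|HgR].
      - exists g. split; [apply Hg|]. split; [apply Hr|]. split; [apply Hr|]. simpl.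
        specialize (Hcleast g HgR). destruct (Nat.eq_dec c g); [|lia]. subst. exfalso. apply HcR'. apply Hg.
      - assert (HgR0 : In g R) by (apply HR', Hg).
        assert (exists d, In d R /\ le d g /\ ~ le g d) as [d [Hd [Hdg Hgd]]].
        { apply NNPP. intros Hn. apply HgR. split; auto. intros d Hd Hdg.
          apply NNPP. intros Hgd. apply Hn. exists d. auto. }
        assert (Hdc : le c d /\ le d c).
        { apply NNPP. intros Hn. apply Hgd. apply Hg; auto. apply HR'. auto. }
        assert (Hcg : le c g) by (apply (Ht _ d); tauto).
        assert (Hgc : ~ le g c) by (intros H; apply Hgd; apply (Ht _ c); tauto).
        destruct (Hstep c g Hcg Hgc) as [e [f [f' [Hce [Hec [Hcf [Hfc [Hfg [Hff' [Hf'f Hef']]]]]]]]]].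
        assert (HfR' : In f R') by (apply HR'; split; [apply (Hup c); auto|tauto]).
        assert (Hgf : le g f) by (apply Hg; auto).
        exists f'. split.
        + apply HR'. split; [apply (Hup c); auto; apply (Ht _ f); auto|].
          intros [_ H]. apply Hfc. apply (Ht _ f'); auto.
        + split; [apply (Ht _ f); auto|]. split; [apply (Ht _ f); auto|]. simpl.
          specialize (Hcleast e (Hemin e Hce Hec)). lia. }
    destruct (IH R' (Some c) Hlen' Hnd' HN' Hup' HJ') as [w' [Hperm' [Hndw' [HW1 [HW2 HW3]]]]].
    assert (Hinw' : forall x, In x w' <-> In x R').
    { intros x. split; intros H; [apply (Permutation_in _ Hperm')|apply (Permutation_in _ (Permutation_sym Hperm'))]; auto. }
    assert (HSS : StronglySorted gt B) by (apply SS_filter, dseq_SS).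
    assert (HcB : In c B) by (apply HB; split; auto).
    assert (Hjoin : B <> [] -> w' <> [] -> nth (length B - 1) B 0 < nth 0 w' 0).
    { intros _ Hw. pose proof (SS_last B c HSS HcB). destruct w' as [|h w'']; [congruence|].
      specialize (HW3 h eq_refl). simpl in HW3. simpl. lia. }
    exists (B ++ w').
    assert (HndB : NoDup (B ++ w')).
    { apply NoDup_app; [apply NoDup_filter, dseq_NoDup|auto|].
      intros x Hx Hx2. apply HB in Hx. apply Hinw', HR' in Hx2. tauto. }
    split.
    { apply NoDup_Permutation; auto. intros x. rewrite in_app_iff, HB, Hinw', HR'.
      split; [tauto|]. intros Hx. destruct (classic (le c x /\ le x c)); tauto. }
    split; [auto|]. split.
    { intros a b Ha Hb. rewrite (sameBlock_app B w' (SS_desc B HSS) Hjoin).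
      destruct (classic (le c a /\ le a c)) as [Ea|Ea]; destruct (classic (le c b /\ le b c)) as [Eb|Eb].
      - split; [intros _; split; [apply (Ht _ c)|apply (Ht _ c)]; tauto|]. intros _. left. split; apply HB; auto.
      - split.
        + intros [[_ Hb']|Hs]; [apply HB in Hb'; tauto|]. apply sameBlock_in in Hs. destruct Hs as [Hs _]. apply Hinw', HR' in Hs. tauto.
        + intros [H1 H2]. exfalso. apply Eb. split; [apply (Ht _ a); tauto|apply (Ht _ a); tauto].
      - split.
        + intros [[Ha' _]|Hs]; [apply HB in Ha'; tauto|]. apply sameBlock_in in Hs. destruct Hs as [_ Hs]. apply Hinw', HR' in Hs. tauto.
        + intros [H1 H2]. exfalso. apply Ea. split; [apply (Ht _ b); tauto|apply (Ht _ b); tauto].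
      - rewrite <- HW1 by (apply HR'; auto). split; [|tauto].
        intros [[Ha' _]|Hs]; auto. apply HB in Ha'. tauto. }
    split.
    { intros a b Ha Hb Hab Hba.
      assert (Eb : ~ (le c b /\ le b c)).
      { intros [H1 H2]. apply Hba. apply (Ht _ c); auto. apply Hc; auto. apply (Ht _ b); auto. }
      destruct (classic (le c a /\ le a c)) as [Ea|Ea].
      - apply leftOf_app1; [apply HB; tauto|apply Hinw', HR'; auto].
      - apply leftOf_app2. apply HW2; auto; apply HR'; auto. }
    { intros h Hh. destruct B as [|x B'] eqn:EB; [destruct HcB|]. simpl in Hh. inversion Hh; subst h.
      destruct (HJ c Hc) as [g' [Hg' [H1 [H2 Hm]]]].
      assert (In g' (x :: B')) by (apply HB; auto).
      pose proof (SS_head x B' g' HSS H).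
      destruct m0; simpl in *; auto. lia. }
Qed.
Open Scope R_scope.

Definition Gsh (l : list (hyp * (nat -> R))) (a b : nat) : Prop :=
  exists d, In d l /\
   ((a = fst (fst d) /\ b = snd (fst d)) \/ (a = snd (fst d) /\ b = fst (fst d)) \/
    ((fst (fst d) < a < snd (fst d))%nat /\ snd d a < snd d (fst (fst d)) /\ b = fst (fst d)) \/
    ((fst (fst d) < b < snd (fst d))%nat /\ snd d (fst (fst d)) < snd d b /\ a = fst (fst d))).

Lemma sd_facts : forall n d, shardData n d ->
  (fst (fst d) < snd (fst d) < n)%nat /\
  forall k, (fst (fst d) < k < snd (fst d))%nat -> snd d k <> snd d (fst (fst d)).
Proof.
  intros n [[i j] p] [Hv Hs]. simpl in *. split; [exact Hv|].
  apply (shardDomain_char n i j p Hv) in Hs. apply Hs.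
Qed.

Lemma X_char : forall n l, Forall (shardData n) l -> forall x,
  shardInter n l x <-> inV n x /\ forall a b, Gsh l a b -> x a <= x b.
Proof.
  intros n l Hl x. rewrite Forall_forall in Hl. unfold shardInter. rewrite Forall_forall. split.
  - intros [Hx Hall]. split; auto. intros a b [d [Hd Hab]].
    destruct d as [[i j] p]. simpl in Hab. destruct (Hl _ Hd) as [Hv Hs]. simpl in Hv, Hs.
    specialize (Hall _ Hd). simpl in Hall. apply (shard_char n i j p x Hv Hs) in Hall.
    destruct Hall as [_ [Hij Hk]].
    destruct Hab as [[-> ->]|[[-> ->]|[[Ha [Hlt ->]]|[Hb [Hlt ->]]]]].
    + lra.
    + lra.
    + apply (Hk a Ha); auto.
    + apply (Hk b Hb); auto.
  - intros [Hx HG]. split; auto. intros [[i j] p] Hd. destruct (Hl _ Hd) as [Hv Hs]. simpl in Hv, Hs.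
    simpl. apply (shard_char n i j p x Hv Hs). split; auto. split.
    + apply Rle_antisym; apply HG; exists ((i,j),p); split; auto; simpl; auto.
    + intros k Hk. split; intros H; apply HG; exists ((i,j),p); split; auto; simpl; right; right; auto.
Qed.

Definition lesh (l : list (hyp * (nat -> R))) : nat -> nat -> Prop := clos_refl_trans nat (Gsh l).

Lemma le_sound : forall l (x : nat -> R), (forall a b, Gsh l a b -> x a <= x b) ->
  forall a b, lesh l a b -> x a <= x b.
Proof.
  intros l x HG a b H. induction H; [apply HG; auto|lra|lra].
Qed.

Lemma G_bound : forall n l, Forall (shardData n) l -> forall a b, Gsh l a b -> (a < n)%nat /\ (b < n)%nat.
Proof.
  intros n l Hl a b [d [Hd Hab]]. rewrite Forall_forall in Hl. destruct (sd_facts n d (Hl d Hd)) as [Hv _].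
  destruct Hab as [[-> ->]|[[-> ->]|[[Ha [_ ->]]|[Hb [_ ->]]]]]; lia.
Qed.

Lemma le_bound : forall n l, Forall (shardData n) l -> forall a b, lesh l a b -> a = b \/ (b < n)%nat.
Proof.
  intros n l Hl a b H. apply clos_rt_rtn1 in H. induction H; auto.
  right. apply (G_bound n l Hl y z H).
Qed.

Lemma edge_lemma : forall n l, Forall (shardData n) l -> forall u v k, Gsh l u v ->
  ((u < k < v)%nat \/ (v < k < u)%nat) -> exists e, (e = u \/ e = v) /\ (Gsh l k e \/ Gsh l e k).
Proof.
  intros n l Hl u v k [d [Hd Hab]] Hk. rewrite Forall_forall in Hl.
  destruct (sd_facts n d (Hl d Hd)) as [Hv Hne].
  set (i := fst (fst d)) in *. set (j := snd (fst d)) in *. set (p := snd d) in *.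
  assert (Hki : (i < k < j)%nat -> Gsh l k i \/ Gsh l i k).
  { intros Hk'. specialize (Hne k Hk'). destruct (Rlt_dec (p k) (p i)).
    - left. exists d. split; auto. right; right; left. fold i j p. auto.
    - right. exists d. split; auto. right; right; right. fold i j p. repeat split; auto; try lia.
      destruct (Rtotal_order (p k) (p i)) as [?|[?|?]]; [contradiction|contradiction|lra]. }
  exists i. split; [|apply Hki].
  - destruct Hab as [[-> ->]|[[-> ->]|[[Ha [_ ->]]|[Hb [_ ->]]]]]; auto.
  - destruct Hab as [[-> ->]|[[-> ->]|[[Ha [_ ->]]|[Hb [_ ->]]]]]; lia.
Qed.

Lemma hull : forall n l, Forall (shardData n) l -> forall i c d, clos_refl_trans_1n nat (Gsh l) c d ->
  lesh l d i -> lesh l i c -> forall k, ((c < k < d)%nat \/ (d < k < c)%nat) -> lesh l k i \/ lesh l i k.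
Proof.
  intros n l Hl i c d H. induction H as [c|c c' d Hcc' Hc'd IH]; intros Hdi Hic k Hk; [lia|].
  assert (Hc'dle : lesh l c' d) by (apply clos_rt1n_rt; auto).
  assert (Hic' : lesh l i c') by (eapply rt_trans; [exact Hic|apply rt_step; auto]).
  destruct (Nat.eq_dec k c') as [->|Hkc'].
  - left. eapply rt_trans; eauto.
  - destruct (classic ((c < k < c')%nat \/ (c' < k < c)%nat)) as [Hb|Hb].
    + destruct (edge_lemma n l Hl c c' k Hcc' Hb) as [e [He [Hke|Hek]]].
      * left. apply (rt_trans _ _ _ e); [apply rt_step; auto|].
        destruct He as [->| ->]; [|eapply rt_trans; eauto].
        eapply rt_trans; [apply rt_step; exact Hcc'|]. eapply rt_trans; eauto.
      * right. apply (rt_trans _ _ _ e); [|apply rt_step; auto].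
        destruct He as [->| ->]; auto.
    + apply IH; auto. lia.
Qed.

Lemma hull_eqv : forall n l, Forall (shardData n) l -> forall i j k,
  lesh l i j -> lesh l j i -> (i < k < j)%nat -> lesh l k i \/ lesh l i k.
Proof.
  intros n l Hl i j k Hij Hji Hk. apply (hull n l Hl i i j); auto.
  - apply clos_rt_rt1n; auto.
  - apply rt_refl.
Qed.

Lemma HGlem : forall n l, Forall (shardData n) l -> forall e f, Gsh l e f -> ~ lesh l f e ->
  exists f', lesh l f f' /\ lesh l f' f /\ (e < f')%nat.
Proof.
  intros n l Hl e f [d [Hd Hab]] Hfe. rewrite Forall_forall in Hl.
  destruct (sd_facts n d (Hl d Hd)) as [Hv Hne].
  destruct Hab as [[-> ->]|[[-> ->]|[[Ha [Hlt ->]]|[Hb [Hlt ->]]]]].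
  - exfalso. apply Hfe. apply rt_step. exists d. split; auto.
  - exfalso. apply Hfe. apply rt_step. exists d. split; auto.
  - exists (snd (fst d)). split; [|split; [|lia]]; apply rt_step; exists d; split; auto.
  - exists f. split; [apply rt_refl|]. split; [apply rt_refl|]. lia.
Qed.

Lemma leave_class : forall l c x g, clos_refl_trans_1n nat (Gsh l) x g -> lesh l c x -> lesh l x c ->
  ~ lesh l g c -> exists e f, lesh l c e /\ lesh l e c /\ Gsh l e f /\ ~ lesh l f c /\ lesh l f g.
Proof.
  intros l c x g H. induction H as [x|x y g Hxy Hyg IH]; intros Hcx Hxc Hgc; [contradiction|].
  destruct (classic (lesh l y c)) as [Hyc|Hyc].
  - apply IH; auto. eapply rt_trans; [exact Hcx|apply rt_step; auto].
  - exists x, y. repeat split; auto. apply clos_rt1n_rt; auto.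
Qed.

Lemma Hstep_lem : forall n l, Forall (shardData n) l -> forall c g, lesh l c g -> ~ lesh l g c ->
  exists e f f', lesh l c e /\ lesh l e c /\ lesh l c f /\ ~ lesh l f c /\
      lesh l f g /\ lesh l f f' /\ lesh l f' f /\ (e < f')%nat.
Proof.
  intros n l Hl c g Hcg Hgc.
  destruct (leave_class l c c g (clos_rt_rt1n _ _ _ _ Hcg) (rt_refl _ _ _) (rt_refl _ _ _) Hgc)
    as [e [f [Hce [Hec [Hef [Hfc Hfg]]]]]].
  assert (Hfe : ~ lesh l f e) by (intros H; apply Hfc; eapply rt_trans; eauto).
  destruct (HGlem n l Hl e f Hef Hfe) as [f' [Hff' [Hf'f Hlt]]].
  exists e, f, f'. repeat split; auto. eapply rt_trans; [exact Hce|apply rt_step; auto].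
Qed.

Lemma part1 : forall n l, Forall (shardData n) l ->
  exists w, isPerm n w /\ forall x, shardInter n l x <-> Ccone n w x.
Proof.
  intros n l Hl.
  assert (Hupc : upc (lesh l) (seq 0 n)).
  { intros x y Hx Hxy. apply in_seq in Hx. apply in_seq. destruct (le_bound n l Hl x y Hxy); lia. }
  assert (HJ : Jinv (lesh l) (seq 0 n) None).
  { intros g Hg. exists g. split; [apply Hg|]. split; [apply rt_refl|]. split; [apply rt_refl|]. exact I. }
  destruct (greedy (lesh l) n (fun x => rt_refl _ _ x) (fun x y z => rt_trans _ _ x y z)
              (Hstep_lem n l Hl) n (seq 0 n) None ltac:(rewrite length_seq; lia)
              (seq_NoDup n 0) ltac:(intros x Hx; apply in_seq in Hx; lia) Hupc HJ)
    as [w [Hperm [Hnd [HW1 [HW2 _]]]]].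
  assert (Hs : forall a, (a < n)%nat -> In a (seq 0 n)) by (intros; apply in_seq; lia).
  exists w. split; [exact Hperm|]. intros x. rewrite (X_char n l Hl x). split.
  - intros [Hx HG]. split; auto. split.
    + intros i j Hi Hj Hb. apply HW1 in Hb; auto. destruct Hb.
      apply Rle_antisym; apply (le_sound l x HG); auto.
    + intros i k j Hikj Hj Hij Hki.
      apply HW1 in Hij; try (apply Hs; lia). destruct Hij as [Hij Hji].
      assert (Hnki : ~ (lesh l k i /\ lesh l i k)).
      { intros H. apply Hki. apply HW1; auto; apply Hs; lia. }
      destruct (hull_eqv n l Hl i j k Hij Hji Hikj) as [Hk|Hk].
      * assert (~ lesh l i k) by tauto.
        pose proof (HW2 k i ltac:(apply Hs; lia) ltac:(apply Hs; lia) Hk H).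
        split; intros HL; [apply (le_sound l x HG); auto|].
        exfalso. apply (leftOf_antisym w k i); auto.
      * assert (~ lesh l k i) by tauto.
        pose proof (HW2 i k ltac:(apply Hs; lia) ltac:(apply Hs; lia) Hk H).
        split; intros HL; [|apply (le_sound l x HG); auto].
        exfalso. apply (leftOf_antisym w k i); auto.
  - intros [Hx [HC1 HC2]]. split; auto. intros a b Hab.
    destruct (G_bound n l Hl a b Hab) as [Ha Hb].
    destruct (classic (lesh l b a)) as [Hba|Hba].
    + assert (x a = x b); [|lra]. apply HC1; auto. apply HW1; try apply Hs; auto. split; auto. apply rt_step; auto.
    + assert (HL : leftOf w a b) by (apply HW2; try apply Hs; auto; apply rt_step; auto).
      destruct Hab as [d [Hd Hab]]. pose proof Hl as Hl'. rewrite Forall_forall in Hl'.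
      destruct (sd_facts n d (Hl' d Hd)) as [Hv _].
      assert (Hij : sameBlock w (fst (fst d)) (snd (fst d))).
      { apply HW1; try (apply Hs; lia). split; apply rt_step; exists d; split; auto. }
      destruct Hab as [[-> ->]|[[-> ->]|[[Ha' [Hlt ->]]|[Hb' [Hlt ->]]]]].
      * exfalso. apply Hba. apply rt_step. exists d. split; auto.
      * exfalso. apply Hba. apply rt_step. exists d. split; auto.
      * apply (HC2 (fst (fst d)) a (snd (fst d))); auto; try lia.
        intros H. apply HW1 in H; try (apply Hs; lia). tauto.
      * apply (HC2 (fst (fst d)) b (snd (fst d))); auto; try lia.
        intros H. apply HW1 in H; try (apply Hs; lia). tauto.
Qed.

Lemma leftOf_total : forall w a b, In a w -> In b w -> a <> b -> leftOf w a b \/ leftOf w b a.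
Proof.
  intros w a b Ha Hb Hab. destruct (In_nth w a 0%nat Ha) as [p [Hp Hpa]].
  destruct (In_nth w b 0%nat Hb) as [q [Hq Hqb]].
  destruct (Nat.lt_total p q) as [H|[H|H]].
  - left. exists p, q. auto.
  - subst. congruence.
  - right. exists q, p. auto.
Qed.

Definition ptf (w : list nat) (i j : nat) : nat -> R :=
  fun m => if dec (m = i \/ m = j) then 0 else if dec (leftOf w m i) then -1 else 1.
Definition pt (n : nat) (w : list nat) (i j : nat) : nat -> R := center n (ptf w i j).

Definition shl (n : nat) (w : list nat) : list (hyp * (nat -> R)) :=
  flat_map (fun i => flat_map (fun j =>
     if dec ((i < j)%nat /\ (j < n)%nat /\ sameBlock w i j) then [((i,j), pt n w i j)] else [])
   (seq 0 n)) (seq 0 n).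

Lemma In_shl : forall n w d, In d (shl n w) <->
  exists i j, (i < j < n)%nat /\ sameBlock w i j /\ d = ((i,j), pt n w i j).
Proof.
  intros n w d. unfold shl. rewrite in_flat_map. split.
  - intros [i [Hi Hd]]. rewrite in_flat_map in Hd. destruct Hd as [j [Hj Hd]].
    destruct (dec ((i < j)%nat /\ (j < n)%nat /\ sameBlock w i j)) eqn:E; [|destruct Hd].
    rewrite dec_true in E. destruct Hd as [ <- | [] ]. exists i, j. destruct E as [E1 [E2 E3]].
    repeat split; auto.
  - intros [i [j [Hij [Hb ->]]]]. exists i. split; [apply in_seq; lia|]. rewrite in_flat_map.
    exists j. split; [apply in_seq; lia|].
    replace (dec ((i < j)%nat /\ (j < n)%nat /\ sameBlock w i j)) with true; [left; auto|].
    symmetry. apply dec_true. repeat split; auto; lia.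
Qed.

Lemma pt_vals : forall n w i j, (i < j < n)%nat ->
  pt n w i j i = pt n w i j j /\
  forall k, (i < k < j)%nat -> (pt n w i j k < pt n w i j i <-> leftOf w k i) /\
                              (pt n w i j i < pt n w i j k <-> ~ leftOf w k i).
Proof.
  intros n w i j Hij. unfold pt.
  assert (Hi : ptf w i j i = 0) by (unfold ptf; rewrite (proj2 (dec_true _)); auto).
  assert (Hj : ptf w i j j = 0) by (unfold ptf; rewrite (proj2 (dec_true _)); auto).
  split.
  - apply center_eq; try lia. rewrite Hi, Hj. reflexivity.
  - intros k Hk. rewrite !center_lt by lia. rewrite Hi.
    unfold ptf. rewrite (proj2 (dec_false (k = i \/ k = j))) by lia.
    destruct (dec (leftOf w k i)) eqn:E.
    + rewrite dec_true in E. split; split; intros; try lra; tauto.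
    + rewrite dec_false in E. split; split; intros; try lra; tauto.
Qed.

Lemma shl_data : forall n w i j, (i < j < n)%nat -> shardData n ((i,j), pt n w i j).
Proof.
  intros n w i j Hij. destruct (pt_vals n w i j Hij) as [Heq Hk].
  split; simpl; [unfold validH; simpl; lia|].
  apply shardDomain_char; [unfold validH; simpl; lia|]. split; [apply center_inV; lia|].
  split; auto. intros k Hk'. destruct (Hk k Hk') as [H1 H2].
  destruct (classic (leftOf w k i)) as [L|L].
  - apply H1 in L. lra.
  - apply H2 in L. lra.
Qed.

Lemma part2 : forall n w, isPerm n w -> isShardIntersection n (Ccone n w).
Proof.
  intros n w Hw. unfold isPerm in Hw.
  assert (Hnd : NoDup w) by (apply (Permutation_NoDup (Permutation_sym Hw)), seq_NoDup).
  assert (Hin : forall a, (a < n)%nat -> In a w).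
  { intros a Ha. apply (Permutation_in _ (Permutation_sym Hw)). apply in_seq. lia. }
  exists (shl n w). split.
  { apply Forall_forall. intros d Hd. apply In_shl in Hd. destruct Hd as [i [j [Hij [_ ->]]]].
    apply shl_data; auto. }
  intros x. unfold shardInter. rewrite Forall_forall. split.
  - intros [Hx [HC1 HC2]]. split; auto. intros d Hd. apply In_shl in Hd.
    destruct Hd as [i [j [Hij [Hb ->]]]]. simpl.
    destruct (shl_data n w i j Hij) as [Hv Hs]. simpl in Hv, Hs.
    apply (shard_char n i j _ x Hv Hs). split; auto. split; [apply HC1; auto; lia|].
    intros k Hk. destruct (pt_vals n w i j Hij) as [_ Hpk]. destruct (Hpk k Hk) as [P1 P2].
    destruct (classic (sameBlock w k i)) as [Hs'|Hs'].
    + assert (x k = x i) by (apply HC1; auto; lia). split; intros; lra.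
    + split; intros H.
      * apply P1 in H. apply (HC2 i k j); auto; lia.
      * apply P2 in H. destruct (leftOf_total w i k (Hin i ltac:(lia)) (Hin k ltac:(lia)) ltac:(lia)) as [L|L];
        [|contradiction]. apply (HC2 i k j); auto; lia.
  - intros [Hx Hall]. split; auto. split.
    + intros i j Hi Hj Hb. destruct (Nat.lt_total i j) as [H|[H|H]].
      * assert (Hd : In ((i,j), pt n w i j) (shl n w)) by (apply In_shl; exists i, j; auto).
        specialize (Hall _ Hd). destruct (shl_data n w i j ltac:(lia)) as [Hv Hs].
        apply (shard_char n i j _ x Hv Hs) in Hall. apply Hall.
      * subst. reflexivity.
      * apply sameBlock_sym in Hb.
        assert (Hd : In ((j,i), pt n w j i) (shl n w)) by (apply In_shl; exists j, i; auto).
        specialize (Hall _ Hd). destruct (shl_data n w j i ltac:(lia)) as [Hv Hs].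
        apply (shard_char n j i _ x Hv Hs) in Hall. symmetry. apply Hall.
    + intros i k j Hikj Hj Hb Hki.
      assert (Hd : In ((i,j), pt n w i j) (shl n w)) by (apply In_shl; exists i, j; split; auto; lia).
      specialize (Hall _ Hd). destruct (shl_data n w i j ltac:(lia)) as [Hv Hs].
      apply (shard_char n i j _ x Hv Hs) in Hall. destruct Hall as [_ [_ Hk]].
      destruct (pt_vals n w i j ltac:(lia)) as [_ Hpk]. destruct (Hpk k Hikj) as [P1 P2].
      destruct (Hk k Hikj) as [K1 K2]. split; intros L.
      * apply K1, P1. auto.
      * apply K2, P2. intros L2. apply (leftOf_antisym w i k); auto.
Qed.

Theorem mainTheorem4 (n : nat) :
  (forall l, Forall (shardData n) l ->
     exists w, isPerm n w /\ forall x, shardInter n l x <-> Ccone n w x) /\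
  (forall w, isPerm n w -> isShardIntersection n (Ccone n w)).
Proof.
  split; [apply part1|apply part2].
Qed.
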